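(* Let $L\ge K>0$, $m\ge 1$, $d\ge 1$. For an $L$-layer MinAgg GNN $\mathcal A_\theta$ with hidden dimension $d$ and $m$-layer aggregation and update MLPs, there is an assignment of the parameters $\theta$ with exactly $mL+mK+K$ nonzero entries (all biases zero) such that $\mathcal A_\theta(G)=\Gamma^K(G)$ for every $G\in\mathscr G$, i.e. $h^{(L)}_v(G)=x_v(\Gamma^K(G))$ for all $v\in V(G)$.
   Context: Attributed graphs: $G=(V,E,X_{\mathrm v},X_{\mathrm e})$ with $V$ finite, $E$ a set of undirected edges, nonnegative edge weights $x_{(u,v)}=x_{(v,u)}\ge 0$ and nonnegative real node features $x_v$. Every node carries a self-loop of weight $x_{(v,v)}=0$, and $\mathcal N(v)=\{v\}\cup\{u:\{u,v\}\in E\}$. A constant $\beta>0$ is fixed; $\mathscr G$ is the set of attributed graphs with $\sum_{e\in E}x_e<\beta$. $x_v(H)$ is the feature of $v$ in $H$. The Bellman–Ford operator $\Gamma$ sends $G$ to the graph with the same vertices, edges and edge weights and node features $x'_v=\min\{x_u+x_{(u,v)}:u\in\mathcal N(v)\}$; $\Gamma^K$ is its $K$-fold iterate. An $m$-layer ReLU MLP $f:\mathbb R^{n_0}\to\mathbb R^{n_m}$ has parameters $W_j\in\mathbb R^{n_j\times n_{j-1}}$, $b_j\in\mathbb R^{n_j}$ ($j\in[m]$) and computes $x^{(0)}=x$, $x^{(j)}=\sigma(W_jx^{(j-1)}+b_j)$, $f(x)=x^{(m)}$, where $\sigma$ is componentwise ReLU. MinAgg GNN: an $L$-layer MinAgg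 GNN $\mathcal A_\theta$ with hidden dimension $d$ and $m$-layer MLPs consists, for each $\ell\in[L]$, of $m$-layer ReLU MLPs $f^{\mathrm{agg},(\ell)}:\mathbb R^{d_{\ell-1}+1}\to\mathbb R^d$ and $f^{\mathrm{up},(\ell)}:\mathbb R^{d+d_{\ell-1}}\to\mathbb R^{d_\ell}$ (internal widths $d$), where $d_0=d_L=1$ and $d_\ell=d$ for $0<\ell<L$. On input $G$: $h^{(0)}_v=x_v$ and $$h^{(\ell)}_v=f^{\mathrm{up},(\ell)}\Big(\min_{u\in\mathcal N(v)}f^{\mathrm{agg},(\ell)}\big(h^{(\ell-1)}_u\oplus x_{(u,v)}\big)\oplus h^{(\ell-1)}_v\Big),$$ with $\min$ taken coordinatewise and $\oplus$ concatenation. The output $\mathcal A_\theta(G)$ is $G$ with node features replaced by $h^{(L)}_v$. $\theta$ is the collection of all weight and bias entries of all these MLPs. *)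

(* Defs.v *)
From mathcomp Require Import all_boot all_order all_algebra.
From mathcomp Require Import reals.
Set Implicit Arguments. Unset Strict Implicit. Unset Printing Implicit Defensive.
Import Order.TTheory GRing.Theory Num.Theory.
Local Open Scope ring_scope.

Section Defs.
Variable R : realType.

(* Vectors of R^n are represented as functions [nat -> R]; only the
   coordinates [i < n] are ever read. *)

Definition relu (t : R) : R := Num.max t 0.

Definition vconcat (a : nat) (x y : nat -> R) : nat -> R :=
  fun i => if (i < a)%N then x i else y (i - a)%N.

(* An m-layer ReLU MLP with widths n 0, ..., n m, weights W j (j = 1..m),
   W j i k the (i,k) entry of W_j in R^{n_j x n_{j-1}}, biases b j i. *)
Fixpoint mlp_layers (n : nat -> nat) (W : nat -> nat -> nat -> R)
  (b : nat -> nat -> R) (j : nat) (x : nat -> R) : nat -> R :=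
  match j with
  | 0 => x
  | j'.+1 => fun i =>
      relu (\sum_(k < n j') W j'.+1 i k * mlp_layers n W b j' x k + b j'.+1 i)
  end.

Definition mlp (m : nat) (n : nat -> nat) W b x := @mlp_layers n W b m x.

Definition mlp_nnz (m : nat) (n : nat -> nat) (W : nat -> nat -> nat -> R)
  (b : nat -> nat -> R) : nat :=
  (\sum_(1 <= j < m.+1)
     ((\sum_(i < n j) \sum_(k < n j.-1) (W j i k != 0%R))
      + \sum_(i < n j) (b j i != 0%R)))%N.

(* Parameters theta of a MinAgg GNN: for each layer l (1..L), the weights
   and biases of f^{agg,(l)} and f^{up,(l)}. *)
Record gnn_params := GnnParams {
  Wagg : nat -> nat -> nat -> nat -> R;  (* l j i k *)
  bagg : nat -> nat -> nat -> R;
  Wup  : nat -> nat -> nat -> nat -> R;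
  bup  : nat -> nat -> nat -> R }.

Definition dim_l (L d l : nat) : nat :=
  if (l == 0)%N || (l == L) then 1%N else d.

Definition agg_widths (L m d l : nat) : nat -> nat :=
  fun j => if j == 0%N then (dim_l L d l.-1 + 1)%N else d.

Definition up_widths (L m d l : nat) : nat -> nat :=
  fun j => if j == 0%N then (d + dim_l L d l.-1)%N
           else if j == m then dim_l L d l else d.

Definition gnn_nnz (L m d : nat) (th : gnn_params) : nat :=
  (\sum_(1 <= l < L.+1)
     (mlp_nnz m (agg_widths L m d l) (Wagg th l) (bagg th l)
      + mlp_nnz m (up_widths L m d l) (Wup th l) (bup th l)))%N.

Definition gnn_biases_zero (th : gnn_params) : Prop :=
  (forall l j i, bagg th l j i = 0) /\ (forall l j i, bup th l j i = 0).

(* Every node carries a self-loop of weight 0: edge weight used inside the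
   neighbourhood N(v) = {v} U {u | adj u v}. *)
Definition attributed_graph (V : finType) (adj : rel V) (w : V -> V -> R)
  (x : V -> R) : Prop :=
  (forall u v, adj u v = adj v u) /\ (forall v, ~~ adj v v) /\
  (forall u v, adj u v -> w u v = w v u) /\
  (forall u v, adj u v -> 0 <= w u v) /\ (forall v, 0 <= x v).

Definition ewt (V : finType) (w : V -> V -> R) (u v : V) : R :=
  if u == v then 0 else w u v.

(* sum over the (undirected) edges of their weights: each edge {u,v} appears
   twice in the ordered double sum *)
Definition total_edge_weight (V : finType) (adj : rel V) (w : V -> V -> R) : R :=
  (\sum_(u : V) \sum_(v : V | adj u v) w u v) / 2.

Definition nbhd_min (V : finType) (adj : rel V) (v : V) (g : V -> R) : R :=
  \big[Num.min/g v]_(u : V | adj u v) g u.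

Definition bellman_ford (V : finType) (adj : rel V) (w : V -> V -> R)
  (x : V -> R) : V -> R :=
  fun v => nbhd_min adj v (fun u => x u + ewt w u v).

Fixpoint gnn_h (L m d : nat) (th : gnn_params) (V : finType) (adj : rel V)
  (w : V -> V -> R) (x : V -> R) (l : nat) : V -> nat -> R :=
  match l with
  | 0 => fun v _ => x v
  | l'.+1 =>
      let h := gnn_h L m d th adj w x l' in
      let dprev := dim_l L d l' in
      fun v =>
        let agg u := mlp m (agg_widths L m d l'.+1) (Wagg th l'.+1) (bagg th l'.+1)
                       (vconcat dprev (h u) (fun _ => ewt w u v)) in
        let mn := fun i => nbhd_min adj v (fun u => agg u i) in
        mlp m (up_widths L m d l'.+1) (Wup th l'.+1) (bup th l'.+1)
            (vconcat d mn (h v))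
  end.

End Defs.

(* Main.v *)
Require Import Defs.
From mathcomp Require Import all_boot all_order all_algebra.
From mathcomp Require Import reals.
From mathcomp Require Import zify.
Import Order.TTheory GRing.Theory Num.Theory.
Local Open Scope ring_scope.

Lemma sum_delta (R : realType) (n a : nat) (f : nat -> R) : (a < n)%N ->
  \sum_(k < n) ((k == a :> nat)%:R * f k) = f a.
Proof.
move=> Ha; rewrite (bigD1 (Ordinal Ha)) //= eqxx mul1r big1 ?addr0 // => k Hk.
suff -> : (k == a :> nat) = false by rewrite mul0r.
apply/negbTE; apply: contra Hk => /eqP e; apply/eqP; exact: val_inj.
Qed.

Lemma relu_ge0 (R : realType) (t : R) : 0 <= relu t.
Proof. by rewrite /relu le_max lexx orbT. Qed.

Lemma relu_id (R : realType) (t : R) : 0 <= t -> relu t = t.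
Proof. by move=> h; rewrite /relu max_l. Qed.

Lemma bool_nz (R : realType) (b : bool) : ((b%:R : R) != 0) = b.
Proof. by case: b; rewrite ?oner_eq0 ?eqxx. Qed.

Lemma sum_eqa n a : (\sum_(k < n) (k == a :> nat) = (a < n))%N.
Proof.
elim: n => [|n IH]; first by rewrite big_ord0.
rewrite big_ord_recr /= IH.
case: (ltngtP a n) => H.
- by rewrite ltnS ltnW.
- by rewrite ltnS leqNgt H.
- by rewrite H ltnSn.
Qed.

Lemma nnz_rows (R : realType) n n' (P : nat -> bool) : (0 < n)%N ->
  (\sum_(i < n) \sum_(k < n') (((((i : nat) == 0%N) && P k)%:R : R) != 0%R)
   = \sum_(k < n') P k)%N.
Proof.
move=> Hn; rewrite (bigD1 (Ordinal Hn)) //= [X in (_ + X)%N]big1 ?addn0.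
  by apply: eq_bigr => k _; rewrite bool_nz.
move=> i Hi; apply: big1 => k _.
suff -> : (i == 0%N :> nat) = false by rewrite /= eqxx.
apply/negbTE; apply: contra Hi => /eqP e; apply/eqP; exact: val_inj.
Qed.

Lemma mlp_nnz_gen (R : realType) m n (W : nat -> nat -> nat -> R) (P : nat -> nat -> bool) :
  (forall j, (0 < j)%N -> (0 < n j)%N) ->
  (forall j i k, W j i k = ((i == 0%N) && P j k)%:R) ->
  mlp_nnz m n W (fun _ _ => 0) = (\sum_(1 <= j < m.+1) \sum_(k < n j.-1) P j k)%N.
Proof.
move=> Hn HW; rewrite /mlp_nnz; apply: eq_big_nat => j /andP[Hj _].
rewrite [X in (_ + X)%N]big1 ?addn0; last by move=> i _; rewrite eqxx.
under eq_bigr do under eq_bigr do rewrite HW.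
exact: nnz_rows (Hn j Hj).
Qed.

Lemma mlp_first (R : realType) m n (W : nat -> nat -> nat -> R) x :
  (1 <= m)%N -> (forall j, (0 < j)%N -> (0 < n j)%N) ->
  (forall j k, (2 <= j)%N -> W j 0%N k = (k == 0%N)%:R) ->
  mlp m n W (fun _ _ => 0) x 0%N = relu (\sum_(k < n 0%N) W 1%N 0%N k * x k).
Proof.
move=> Hm Hn HW; rewrite /mlp.
elim: m Hm => [//|[|m] IH] _; first by rewrite /= addr0.
have -> : mlp_layers n W (fun _ _ => 0) m.+2 x 0%N = relu (\sum_(k < n m.+1) W m.+2 0%N k * mlp_layers n W (fun _ _ => 0) m.+1 x k + 0) by [].
rewrite addr0.
under eq_bigr do rewrite HW //.
rewrite sum_delta ?Hn //.
by rewrite IH // relu_id // relu_ge0.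
Qed.

Definition PA (L K d l j k : nat) : bool :=
  (l <= K)%N && (if j == 1%N then (k == 0%N) || (k == dim_l L d l.-1) else k == 0%N).
Definition PU (K d l j k : nat) : bool :=
  if j == 1%N then k == (if (l <= K)%N then 0%N else d) else k == 0%N.

Definition th0 (R : realType) (L K d : nat) : gnn_params R :=
  GnnParams (fun l j i k => (((i == 0%N) && PA L K d l j k)%:R : R)) (fun _ _ _ => 0)
            (fun l j i k => (((i == 0%N) && PU K d l j k)%:R : R)) (fun _ _ _ => 0).

Lemma dim_l_gt0 L d l : (1 <= d)%N -> (0 < dim_l L d l)%N.
Proof. by move=> hd; rewrite /dim_l; case: ifP. Qed.

Lemma agg_w_gt0 L m d l j : (1 <= d)%N -> (0 < agg_widths L m d l j)%N.
Proof. by move=> hd; rewrite /agg_widths; case: ifP => // _; rewrite addn1. Qed.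

Lemma up_w_gt0 L m d l j : (1 <= d)%N -> (0 < up_widths L m d l j)%N.
Proof.
move=> hd; rewrite /up_widths; case: ifP => _; first by rewrite (leq_trans hd) ?leq_addr.
by case: ifP => _ //; apply: dim_l_gt0.
Qed.

Lemma sum_rows_const m (c : nat -> nat) c1 : (1 <= m)%N ->
  c 1%N = c1 -> (forall j, (2 <= j)%N -> c j = 1%N) ->
  (\sum_(1 <= j < m.+1) c j = c1 + (m - 1))%N.
Proof.
move=> hm h1 h2; rewrite big_ltn ?ltnS // h1.
rewrite (eq_big_nat _ _ (F2 := fun _ => 1%N)); last by move=> j /andP[hj _]; exact: h2.
by rewrite sum_nat_const_nat muln1 subSS.
Qed.

Lemma orb_nat (a b : bool) : ~~ (a && b) -> ((a || b) : nat) = (a + b)%N.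
Proof. by case: a; case: b. Qed.

Lemma agg_count (R : realType) L K m d l : (1 <= m)%N -> (1 <= d)%N ->
  mlp_nnz m (agg_widths L m d l) (Wagg (th0 R L K d) l) (bagg (th0 R L K d) l)
  = if (l <= K)%N then m.+1 else 0%N.
Proof.
move=> hm hd; rewrite (@mlp_nnz_gen R m _ _ (PA L K d l)) //; last first.
  by move=> j _; exact: agg_w_gt0.
rewrite /PA; case: (l <= K)%N => /=; last first.
  by rewrite big1 // => j _; rewrite big1.
rewrite (@sum_rows_const m _ 2%N) //; first lia.
  rewrite /= /agg_widths /=.
  rewrite (eq_bigr (fun k : 'I_ _ => ((k == 0%N :> nat) + (k == dim_l L d l.-1 :> nat))%N)); last first.
    move=> k _; apply: orb_nat; apply/negP => /andP[/eqP -> /eqP e].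
    by move: (dim_l_gt0 L d l.-1 hd); rewrite -e.
  by rewrite big_split /= !sum_eqa addn1 ltnSn.
by move=> j hj; rewrite (gtn_eqF hj) sum_eqa agg_w_gt0.
Qed.

Lemma up_count (R : realType) L K m d l : (1 <= m)%N -> (1 <= d)%N ->
  mlp_nnz m (up_widths L m d l) (Wup (th0 R L K d) l) (bup (th0 R L K d) l) = m.
Proof.
move=> hm hd; rewrite (@mlp_nnz_gen R m _ _ (PU K d l)) //; last first.
  by move=> j _; exact: up_w_gt0.
rewrite (@sum_rows_const m _ 1%N) //; first lia.
  rewrite /PU /= /up_widths /= sum_eqa.
  have := dim_l_gt0 L d l.-1 hd.
  case: (l <= K)%N; lia.
by move=> j hj; rewrite /PU (gtn_eqF hj) sum_eqa up_w_gt0.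
Qed.

Lemma total_count (R : realType) L K m d : (K <= L)%N -> (1 <= m)%N -> (1 <= d)%N ->
  gnn_nnz L m d (th0 R L K d) = (m * L + m * K + K)%N.
Proof.
move=> hKL hm hd; rewrite /gnn_nnz.
rewrite (eq_big_nat _ _ (F2 := fun l => if (l <= K)%N then (m.+1 + m)%N else m)); last first.
  by move=> l _; rewrite agg_count // up_count //; case: (l <= K)%N.
rewrite (@big_cat_nat _ _ _ K.+1) //= ?ltnS //.
rewrite (eq_big_nat _ _ (F2 := fun l => (m.+1 + m)%N)); last first.
  by move=> l /andP[_]; rewrite ltnS => ->.
rewrite [X in (_ + X)%N](eq_big_nat _ _ (F2 := fun l => m)); last first.
  by move=> l /andP[h _]; rewrite leqNgt h.
rewrite !sum_nat_const_nat; nia.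
Qed.

Lemma nbhd_min_ext (R : realType) (V : finType) (adj : rel V) v (g g' : V -> R) :
  g v = g' v -> (forall u, adj u v -> g u = g' u) -> nbhd_min adj v g = nbhd_min adj v g'.
Proof. by move=> h1 h2; rewrite /nbhd_min h1; apply: eq_bigr. Qed.

Lemma nbhd_min_ge0 (R : realType) (V : finType) (adj : rel V) v (g : V -> R) :
  0 <= g v -> (forall u, adj u v -> 0 <= g u) -> 0 <= nbhd_min adj v g.
Proof.
move=> h1 h2; rewrite /nbhd_min; apply: (big_ind (fun t : R => 0 <= t)) => // a b ha hb.
by rewrite le_min ha hb.
Qed.

Lemma ewt_ge0 (R : realType) (V : finType) (adj : rel V) (w : V -> V -> R) x u v :
  attributed_graph adj w x -> (u == v) || adj u v -> 0 <= ewt w u v.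
Proof.
move=> [_ [_ [_ [hw _]]]]; rewrite /ewt; case: eqP => // _ /= h; exact: hw.
Qed.

Lemma iter_ge0 (R : realType) (V : finType) (adj : rel V) (w : V -> V -> R) x n v :
  attributed_graph adj w x -> 0 <= iter n (bellman_ford adj w) x v.
Proof.
move=> hG; elim: n v => [|n IH] v /=; first by case: hG => [_ [_ [_ [_ hx]]]].
apply: nbhd_min_ge0 => [|u hu]; apply: addr_ge0; rewrite ?IH //.
  by apply: (@ewt_ge0 R V adj w x) => //; rewrite eqxx.
by apply: (@ewt_ge0 R V adj w x) => //; rewrite hu orbT.
Qed.

Lemma mlp_ge0 (R : realType) m n (W : nat -> nat -> nat -> R) b x i :
  (1 <= m)%N -> 0 <= mlp m n W b x i.
Proof. by case: m => //= m _; exact: relu_ge0. Qed.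

Lemma semantics (R : realType) L K m d (V : finType) (adj : rel V) (w : V -> V -> R) x :
  (1 <= m)%N -> (1 <= d)%N -> attributed_graph adj w x ->
  forall l, (l <= L)%N -> forall v,
  gnn_h L m d (th0 R L K d) adj w x l v 0%N = iter (minn l K) (bellman_ford adj w) x v.
Proof.
move=> hm hd hG; elim=> [|l IH] hl v; first by rewrite min0n.
set th := th0 R L K d.
set h := gnn_h L m d th adj w x.
have -> : h l.+1 v 0%N = mlp m (up_widths L m d l.+1) (Wup th l.+1) (bup th l.+1)
   (vconcat d (fun i => nbhd_min adj v (fun u => mlp m (agg_widths L m d l.+1)
      (Wagg th l.+1) (bagg th l.+1) (vconcat (dim_l L d l) (h l u) (fun _ => ewt w u v)) i))
      (h l v)) 0%N by [].
rewrite mlp_first //; last 2 first.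
- by move=> j _; exact: up_w_gt0.
- by move=> j k hj; rewrite /= /PU (gtn_eqF hj).
have hdp := dim_l_gt0 L d l hd.
rewrite (eq_bigr (fun k : 'I_ _ => ((k == (if (l.+1 <= K)%N then 0%N else d) :> nat)%:R *
     vconcat d (fun i => nbhd_min adj v (fun u => mlp m (agg_widths L m d l.+1)
      (Wagg th l.+1) (bagg th l.+1) (vconcat (dim_l L d l) (h l u) (fun _ => ewt w u v)) i))
      (h l v) k))); last by move=> k _.
rewrite sum_delta; last first.
  rewrite /up_widths /=; case: (l.+1 <= K)%N; lia.
have IH' := IH (ltnW hl).
case: (leqP l.+1 K) => hlK.
- rewrite /vconcat hd.
  rewrite iterS /bellman_ford.
  have hmin : minn l K = l by lia.
  rewrite relu_id; last first.
    by apply: nbhd_min_ge0 => [|u hu]; apply: mlp_ge0.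
  have key : forall u, (u == v) || adj u v ->
    mlp m (agg_widths L m d l.+1) (Wagg th l.+1) (bagg th l.+1)
      (fun i : nat => if (i < dim_l L d l)%N then h l u i else ewt w u v) 0%N
    = iter l (bellman_ford adj w) x u + ewt w u v.
    move=> u hu.
    rewrite mlp_first //; last 2 first.
    * by move=> j _; exact: agg_w_gt0.
    * by move=> j k hj; rewrite /= /PA hlK (gtn_eqF hj).
    set F := (fun i : nat => if (i < dim_l L d l)%N then h l u i else ewt w u v).
    rewrite (eq_bigr (fun k : 'I_ _ => ((k == 0%N :> nat)%:R * F k + (k == dim_l L d l :> nat)%:R * F k))); last first.
      move=> k _; rewrite /= /PA hlK /= -mulrDl; congr (_ * _).
      case: eqP => [->|_] /=; last by rewrite add0r.
      by rewrite eq_sym (gtn_eqF hdp) addr0.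
    rewrite big_split /= !sum_delta /agg_widths /= ?addn1 //.
    rewrite /F hdp ltnn /h IH' ?(ltnW hl) // hmin relu_id //.
    apply: addr_ge0; first exact: iter_ge0.
    exact: (@ewt_ge0 R V adj w x).
  by apply: nbhd_min_ext => [|u hu]; apply: key; rewrite ?eqxx ?hu ?orbT.
- rewrite /vconcat ltnn subnn /h IH' relu_id; last exact: iter_ge0.
  by congr (iter _ _ _ _); lia.
Qed.

Theorem mainTheorem5 (R : realType) (beta : R) (L K m d : nat) :
  0 < beta -> (0 < K)%N -> (K <= L)%N -> (1 <= m)%N -> (1 <= d)%N ->
  exists th : gnn_params R,
    gnn_nnz L m d th = (m * L + m * K + K)%N /\
    gnn_biases_zero th /\
    forall (V : finType) (adj : rel V) (w : V -> V -> R) (x : V -> R),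
      attributed_graph adj w x ->
      total_edge_weight adj w < beta ->
      forall v : V,
        gnn_h L m d th adj w x L v 0%N = iter K (bellman_ford adj w) x v.
Proof.
move=> _ _ hKL hm hd; exists (th0 R L K d); split; first exact: total_count.
split; first by split.
move=> V adj w x hG _ v.
by rewrite semantics // (minn_idPr hKL).
Qed.
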